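(* Let $r$ be a positive integer, and let $\ell$ and $k$ be nonnegative integers such that $k\geq b(r)+2$. Suppose $d\in B_r$ satisfies $d<p_{k+1}-r$ and $d(p_{k+\ell}-r)<(d+1)(p_k-r)$. If $\displaystyle n=d\,p_{k+\ell}\prod_{i=b(r)+1}^{k-1}p_i$, then $n\in F_r$.
   Context: $p_i$ denotes the $i$-th prime. For a positive integer $r$, the Schemmel totient function $S_r$ is the multiplicative arithmetic function with $S_r(p^{\alpha})=0$ if $p\leq r$ and $S_r(p^{\alpha})=p^{\alpha-1}(p-r)$ if $p>r$, for all primes $p$ and positive integers $\alpha$ (and $S_r(1)=1$). $B_r=\{n\in\mathbb{N}: S_r(n)>0\}$, i.e. the set of positive integers whose smallest prime factor exceeds $r$, together with $1$. $F_r$ (the sparsely Schemmel totient numbers of order $r$) is the set of $n\in B_r$ such that $S_r(n)<S_r(m)$ for all $m\in B_r$ with $m>n$. $b(1)=0$, and for $r\geq 2$, $b(r)$ is the largest integer with $p_{b(r)}\leq r$. *)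

(* Defs.v *)
From mathcomp Require Import all_boot.
Set Implicit Arguments. Unset Strict Implicit. Unset Printing Implicit Defensive.

Lemma ex_prime_above (m : nat) : exists p, (m < p) && prime p.
Proof. case: (prime_above m) => p Hm Hp; exists p; by rewrite Hm Hp. Qed.

Definition nextprime (m : nat) : nat := ex_minn (ex_prime_above m).

Lemma nextprime_gt m : m < nextprime m.
Proof. rewrite /nextprime; case: ex_minnP => p /andP[] //. Qed.

(* pth i = p_i, the i-th prime, 1-indexed: pth 1 = 2, pth 2 = 3, ...
   (pth 0 = 0 is a dummy value, never used as a prime). *)
Fixpoint pth (i : nat) : nat :=
  match i with
  | 0 => 0
  | i'.+1 => nextprime (pth i')
  end.

Lemma pth_ge i : i <= pth i.
Proof. elim: i => //= i IH; exact: leq_ltn_trans IH (nextprime_gt _). Qed.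

(* b(r): the largest integer j with p_j <= r; j = 0 is admissible
   (p_0 is the dummy 0), so b 1 = 0 as in the paper. *)
Lemma b_ex (r : nat) : exists j, pth j <= r.
Proof. by exists 0. Qed.

Lemma b_bound (r : nat) : forall j, pth j <= r -> j <= r.
Proof. move=> j Hj; exact: leq_trans (pth_ge j) Hj. Qed.

Definition b (r : nat) : nat := ex_maxn (b_ex r) (@b_bound r).

Definition Schemmel (r n : nat) : nat :=
  \prod_(p <- primes n) (if p <= r then 0 else p ^ (logn p n).-1 * (p - r)).

Definition inB (r n : nat) : bool := (0 < n) && (0 < Schemmel r n).

Definition inF (r n : nat) : Prop :=
  inB r n /\ forall m, inB r m -> n < m -> Schemmel r n < Schemmel r m.

(* Main.v *)
Require Import Defs.
From mathcomp Require Import all_boot.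
From mathcomp Require Import zify.
Set Implicit Arguments. Unset Strict Implicit. Unset Printing Implicit Defensive.


Lemma nextprime_prime m : prime (nextprime m).
Proof. rewrite /nextprime; case: ex_minnP => p /andP[] //. Qed.

Lemma nextprime_min m q : m < q -> prime q -> nextprime m <= q.
Proof. move=> H1 H2; rewrite /nextprime; case: ex_minnP => p _ Hm; apply: Hm; by rewrite H1 H2. Qed.

Lemma pth_S i : pth i.+1 = nextprime (pth i).
Proof. by []. Qed.

Lemma pth_ltS i : pth i < pth i.+1.
Proof. exact: nextprime_gt. Qed.

Lemma pth_lt i j : i < j -> pth i < pth j.
Proof.
elim: j => // j IH; rewrite ltnS leq_eqVlt => /orP[/eqP->|H]; first exact: pth_ltS.
exact: ltn_trans (IH H) (pth_ltS j).
Qed.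

Lemma pth_le i j : i <= j -> pth i <= pth j.
Proof. rewrite leq_eqVlt => /orP[/eqP->//|H]; exact: ltnW (pth_lt H). Qed.

Lemma pth_lt_inv i j : pth i < pth j -> i < j.
Proof. move=> H; rewrite ltnNge; apply/negP => H2; move: (pth_le H2); rewrite leqNgt H. done. Qed.

Lemma pth_prime i : 0 < i -> prime (pth i).
Proof. case: i => // i _; exact: nextprime_prime. Qed.

Lemma pth_next i q : prime q -> pth i < q -> pth i.+1 <= q.
Proof. move=> Hq H; exact: nextprime_min. Qed.

Lemma prime_pth_aux N q : prime q -> q <= pth N -> exists i, 0 < i /\ pth i = q.
Proof.
move=> Hq; elim: N => [|N IH] /=.
  by rewrite leqn0 => /eqP E; move: Hq; rewrite E.
move=> H; case: (leqP q (pth N)) => H2; first exact: IH.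
exists N.+1; split => //; apply/eqP; rewrite eqn_leq H andbT.
exact: pth_next.
Qed.

Lemma prime_pth q : prime q -> exists i, 0 < i /\ pth i = q.
Proof. move=> Hq; exact: (prime_pth_aux (N:=q)) (pth_ge q). Qed.

Lemma b_spec r : pth (b r) <= r /\ r < pth (b r).+1.
Proof.
rewrite /b; case: ex_maxnP => j H1 H2; split => //.
rewrite ltnNge; apply/negP => H; move: (H2 _ H); by rewrite ltnn.
Qed.


Definition pA r k := map pth (iota (b r + 1) (k - (b r + 1))).

Lemma mem_pA r k q : (q \in pA r k) = [&& prime q, r < q & q < pth k].
Proof.
have [Hb1 Hb2] := b_spec r.
apply/idP/idP.
  case/mapP => i; rewrite mem_iota => /andP[H1 H2] ->.
  have Hi : 0 < i by lia.
  rewrite pth_prime //=; apply/andP; split.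
    apply: leq_trans Hb2 _; apply: pth_le; lia.
  apply: pth_lt; lia.
case/and3P => Hq H1 H2.
have [i [Hi Ei]] := prime_pth Hq.
apply/mapP; exists i => //; rewrite mem_iota.
rewrite -Ei in H1 H2.
have := pth_lt_inv H2.
have : b r < i.
  rewrite ltnNge; apply/negP => H; move: (pth_le H); lia.
lia.
Qed.

Lemma uniq_pA r k : uniq (pA r k).
Proof.
rewrite map_inj_in_uniq ?iota_uniq // => i j _ _ E.
apply/eqP; rewrite eqn_leq; apply/andP; split; rewrite leqNgt; apply/negP => H;
  move: (pth_lt H); rewrite E ltnn //.
Qed.

Lemma prod_pA r k F : \prod_(b r + 1 <= i < k) F (pth i) = \prod_(q <- pA r k) F q.
Proof. by rewrite /pA big_map. Qed.


Definition Mx x := \prod_(q <- primes x) q ^ (logn q x).-1.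

Lemma x_decomp x : 0 < x -> x = \prod_(q <- primes x) q ^ logn q x.
Proof. move=> H; rewrite {1}(prod_prime_decomp H) prime_decompE big_map //. Qed.

Lemma x_eq x : 0 < x -> x = Mx x * \prod_(q <- primes x) q.
Proof.
move=> H; rewrite {1}(x_decomp H) /Mx -big_split /=.
apply: eq_big_seq => q Hq; rewrite -expnSr prednK // logn_gt0 //.
Qed.

Lemma S_eq r x : (forall q, q \in primes x -> r < q) ->
  Schemmel r x = Mx x * \prod_(q <- primes x) (q - r).
Proof.
move=> H; rewrite /Schemmel /Mx -big_split /=.
apply: eq_big_seq => q Hq; rewrite leqNgt H //.
Qed.

Lemma inB_iff r x : inB r x <-> 0 < x /\ (forall q, q \in primes x -> r < q).
Proof.
rewrite /inB; split.
  case/andP => H1 H2; split => // q Hq; rewrite ltnNge; apply/negP => Hle.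
  move: H2; rewrite /Schemmel (big_rem _ Hq) /= Hle //.
case=> H1 H2; rewrite H1 /= (S_eq H2) muln_gt0; apply/andP; split.
  rewrite /Mx prodn_gt0 // => q; rewrite expn_gt0.
  by case: q => //.
rewrite big_seq prodn_cond_gt0 // => q Hq; rewrite subn_gt0; exact: H2.
Qed.


Lemma merge r a c x e : r < x -> x <= e -> c * x <= a ->
  (x - r) * (a * e - r * c * x) <= (a - r * c) * (e - r) * x.
Proof.
move=> H1 H2 H3.
have [w Hw] : exists w, x = r + w.+1 by exists (x - r).-1; lia.
subst x.
have [u Hu] : exists u, e = r + w.+1 + u by exists (e - (r + w.+1)); lia.
subst e.
have [v Hv] : exists v, a = c * (r + w.+1) + v by exists (a - c * (r + w.+1)); lia.
subst a.
set W := w.+1.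
have E1 : r + W - r = W by rewrite addKn.
have E2 : (c * (r + W) + v) * (r + W + u) - r * c * (r + W)
   = (c * W + v) * (r + W) + (c * (r + W) + v) * u.
  have -> : (c * (r + W) + v) * (r + W + u) = r * c * (r + W) + ((c * W + v) * (r + W) + (c * (r + W) + v) * u) by nia.
  by rewrite addKn.
have E3 : c * (r + W) + v - r * c = c * W + v.
  have -> : c * (r + W) + v = r * c + (c * W + v) by nia.
  by rewrite addKn.
have E4 : r + W + u - r = W + u by rewrite -addnA addKn.
rewrite E1 E2 E3 E4.
have -> : (c * W + v) * (W + u) * (r + W) = W * ((c * W + v) * (r + W) + (c * (r + W) + v) * u) + u * v * r.
  nia.
exact: leq_addr.
Qed.

Lemma in_tl (T : eqType) (y x : T) s : x \in s -> x \in y :: s.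
Proof. by rewrite inE => ->; rewrite orbT. Qed.
Arguments in_tl {T y x s}.

Lemma pair_le r (E D : seq nat) : size E <= size D ->
  (forall e x, e \in E -> x \in D -> x <= e) -> (forall x, x \in D -> r <= x) ->
  \prod_(e <- E) e * \prod_(x <- D) (x - r) <= \prod_(e <- E) (e - r) * \prod_(x <- D) x.
Proof.
elim: E D => [|e E IH] D /=.
  move=> _ _ H; rewrite !big_nil !mul1n big_seq [X in _ <= X]big_seq.
  apply: leq_prod => x Hx; exact: leq_subr.
case: D => [//|x D] /= Hs Hle Hr; rewrite !big_cons.
have H1 : e * (x - r) <= (e - r) * x.
  have := Hle e x (mem_head _ _) (mem_head _ _); have := Hr x (mem_head _ _); nia.
have H2 := IH D Hs (fun e' x' He Hx => Hle e' x' (in_tl He) (in_tl Hx))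
  (fun x' Hx => Hr x' (in_tl Hx)).
have -> : e * \prod_(e0 <- E) e0 * ((x - r) * \prod_(x0 <- D) (x0 - r))
  = (e * (x - r)) * (\prod_(e0 <- E) e0 * \prod_(x0 <- D) (x0 - r)) by nia.
have -> : (e - r) * \prod_(e0 <- E) (e0 - r) * (x * \prod_(x0 <- D) x0)
  = ((e - r) * x) * (\prod_(e0 <- E) (e0 - r) * \prod_(x0 <- D) x0) by nia.
exact: leq_mul.
Qed.

Lemma longer_le r (E D : seq nat) : size D <= size E ->
  (forall e x, e \in E -> x \in D -> x <= e) -> (forall e, e \in E -> r < e) ->
  \prod_(x <- D) (x - r) <= \prod_(e <- E) (e - r).
Proof.
elim: E D => [|e E IH] D /=.
  by case: D.
move=> Hs Hle Hr; rewrite big_cons.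
have He : 0 < e - r by rewrite subn_gt0 Hr // mem_head.
case: D Hs Hle => [|x D] /= Hs Hle.
  rewrite big_nil muln_gt0 He /= big_seq prodn_cond_gt0 // => e' He'.
  rewrite subn_gt0; apply: Hr; exact: in_tl.
rewrite big_cons; apply: leq_mul.
  apply: leq_sub2r; apply: Hle; exact: mem_head.
apply: IH => //.
  move=> e' x' He' Hx'; apply: Hle; exact: in_tl.
move=> e' He'; apply: Hr; exact: in_tl.
Qed.

Lemma gl r (D E : seq nat) a c : size E = size D -> 0 < c -> r * c <= a ->
  (forall x, x \in D -> r < x /\ c * x <= a) ->
  (forall x e, x \in D -> e \in E -> x <= e) ->
  \prod_(x <- D) (x - r) * (a * \prod_(e <- E) e - r * c * \prod_(x <- D) x)
   <= (a - r * c) * \prod_(e <- E) (e - r) * \prod_(x <- D) x.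
Proof.
elim: D E a c => [|x D IH] [|e E] a c //= Hs Hc Hrc HD Hle.
  by rewrite !big_nil !muln1 mul1n.
rewrite !big_cons.
have [Hx1 Hx2] := HD x (mem_head _ _).
have Hxe := Hle x e (mem_head _ _) (mem_head _ _).
have IH' := IH E (a * e) (c * x) (eq_add_S _ _ Hs) _ _ _ _.
have Hm := merge Hx1 Hxe Hx2.
have Hcx : 0 < c * x by rewrite muln_gt0 Hc; lia.
have Hrcx : r * (c * x) <= a * e by nia.
have HD' : forall x0, x0 \in D -> r < x0 /\ c * x * x0 <= a * e.
  move=> y Hy; have [Hy1 Hy2] := HD y (in_tl Hy).
  have := Hle y e (in_tl Hy) (mem_head _ _). nia.
have Hle' : forall x0 e0, x0 \in D -> e0 \in E -> x0 <= e0.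
  move=> y f Hy Hf; exact: Hle y f (in_tl Hy) (in_tl Hf).
have I := IH' Hcx Hrcx HD' Hle'.
set PD := \prod_(x0 <- D) x0 in I *.
set PE := \prod_(x0 <- E) x0 in I *.
set FD := \prod_(x0 <- D) (x0 - r) in I *.
set FE := \prod_(x0 <- E) (x0 - r) in I *.
have -> : a * (e * PE) - r * c * (x * PD) = a * e * PE - r * (c * x) * PD by rewrite !mulnA.
have -> : (a - r * c) * ((e - r) * FE) * (x * PD) = ((a - r * c) * (e - r) * x) * (FE * PD) by nia.
apply: leq_trans (_ : (x - r) * (a * e - r * c * x) * (FE * PD) <= _); last first.
  exact: leq_mul.
have -> : (x - r) * (a * e - r * c * x) * (FE * PD) = (x - r) * ((a * e - r * (c * x)) * FE * PD) by rewrite !mulnA; nia.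
have -> : (x - r) * FD * (a * e * PE - r * (c * x) * PD) = (x - r) * (FD * (a * e * PE - r * (c * x) * PD)) by nia.
exact: leq_mul.
Qed.


Lemma core r d M p pk pk1 (D E : seq nat) :
  (forall x, x \in D -> r < x < pk) ->
  (forall e, e \in E -> pk <= e) ->
  sorted ltn E -> (forall e, e \in E -> prime e) ->
  (forall q, prime q -> pk < q -> pk1 <= q) ->
  r < pk -> pk <= p -> d * (p - r) < (d + 1) * (pk - r) -> d < pk1 - r -> 0 < M ->
  d * p * \prod_(x <- D) x < M * \prod_(e <- E) e ->
  d * (p - r) * \prod_(x <- D) (x - r) < M * \prod_(e <- E) (e - r).
Proof.
move=> HD HE Hs HP Hnext Hrpk Hpkp H5 H4 HM Hlt.
have HDpos : 0 < \prod_(x <- D) x.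
  rewrite big_seq prodn_cond_gt0 // => x /HD; lia.
have HFDpos : 0 < \prod_(x <- D) (x - r).
  rewrite big_seq prodn_cond_gt0 // => x /HD; lia.
have Hle : forall e x, e \in E -> x \in D -> x <= e.
  move=> e x /HE He /HD Hx; lia.
have HEr : forall e, e \in E -> r < e.
  move=> e /HE He; lia.
case: (leqP (size E) (size D)) => Hsz.
  have Hp := pair_le Hsz Hle (fun x Hx => ltnW (proj1 (andP (HD x Hx)))).
  move: Hp Hlt HDpos HFDpos.
  set PD := \prod_(x <- D) x; set PE := \prod_(e <- E) e.
  set FD := \prod_(x <- D) (x - r); set FE := \prod_(e <- E) (e - r).
  move=> Hp Hlt HDpos HFDpos.
  have H1 : (d * p * PD).+1 * FD <= M * FE * PD.
    apply: leq_trans (_ : M * PE * FD <= _); first exact: leq_mul.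
    by rewrite -!mulnA leq_pmul2l.
  have H2 : d * (p - r) * FD * PD < (d * p * PD).+1 * FD.
    rewrite mulSn; apply: leq_trans (_ : (d * p * PD * FD).+1 <= _).
      rewrite ltnS.
      have -> : d * (p - r) * FD * PD = (d * (p - r)) * (PD * FD) by nia.
      have -> : d * p * PD * FD = (d * p) * (PD * FD) by nia.
      apply: leq_mul => //; apply: leq_mul => //; exact: leq_subr.
    lia.
  have H3 := leq_trans H2 H1.
  by rewrite ltn_pmul2r in H3.
case: E Hs HP HE Hle HEr Hlt Hsz => [//|e1 E] Hs HP HE Hle HEr Hlt Hsz.
have He1 : pk <= e1 by apply: HE; exact: mem_head.
have He1r : r < e1 by lia.
move: Hsz; rewrite /= ltnS leq_eqVlt => /orP[/eqP Hsz|Hsz].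
  case: (leqP M d) => HMd.
    have G := @gl r D E e1 1 (esym Hsz) isT.
    have G1 : r * 1 <= e1 by rewrite muln1; lia.
    have G2 : forall x, x \in D -> r < x /\ 1 * x <= e1.
      move=> x Hx; have := HD x Hx; lia.
    have G3 : forall x e, x \in D -> e \in E -> x <= e.
      move=> x e Hx He; apply: Hle => //; exact: in_tl.
    have {G1 G2 G3} G := G G1 G2 G3.
    move: G Hlt HDpos HFDpos; rewrite !big_cons !muln1.
    set PD := \prod_(x <- D) x; set PE := \prod_(e <- E) e.
    set FD := \prod_(x <- D) (x - r); set FE := \prod_(e <- E) (e - r).
    move=> G Hlt HDpos HFDpos.
    have K1 : M * (FD * (e1 * PE - r * PD)) <= M * ((e1 - r) * FE * PD) by rewrite leq_pmul2l.
    have K2 : (d * (p - r) * PD).+1 <= M * (e1 * PE - r * PD).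
      have -> : M * (e1 * PE - r * PD) = M * e1 * PE - M * r * PD by rewrite mulnBr !mulnA.
      have K3 : M * r * PD <= d * r * PD by rewrite leq_mul2r leq_mul2r HMd !orbT.
      have K4 : d * (p - r) * PD + d * r * PD = d * p * PD.
        rewrite -mulnDl -mulnDr subnK //; lia.
      lia.
    have K5 : d * (p - r) * FD * PD < (d * (p - r) * PD).+1 * FD.
      rewrite mulSn; have -> : d * (p - r) * FD * PD = d * (p - r) * PD * FD by nia.
      lia.
    have K6 : (d * (p - r) * PD).+1 * FD <= M * (FD * (e1 * PE - r * PD)).
      rewrite [FD * _]mulnC mulnA; exact: leq_mul K2 (leqnn FD).
    have K7 := leq_trans K5 (leq_trans K6 K1).
    rewrite -(ltn_pmul2r HDpos); apply: (leq_trans K7).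
    by rewrite !mulnA.
  have L := @longer_le r E D (eq_leq Hsz) (fun e x He Hx => Hle e x (in_tl He) Hx)
    (fun e He => HEr e (in_tl He)).
  rewrite big_cons.
  move: L HFDpos; set FD := \prod_(x <- D) (x - r); set FE := \prod_(e <- E) (e - r).
  move=> L HFDpos.
  have K1 : d * (p - r) * FD < (d + 1) * (pk - r) * FD by rewrite ltn_pmul2r.
  apply: (leq_trans K1); rewrite mulnA; apply: leq_mul => //; apply: leq_mul; first lia.
  exact: leq_sub2r.
case: E Hs HP HE Hle HEr Hlt Hsz => [//|e2 E] Hs HP HE Hle HEr Hlt Hsz.
have He12 : e1 < e2 by move: Hs => /= /andP[].
have He2 : pk1 <= e2.
  apply: Hnext; [apply: HP; exact: in_tl (mem_head _ _) | lia].
have L := @longer_le r E D Hsz (fun e x He Hx => Hle e x (in_tl (in_tl He)) Hx)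
    (fun e He => HEr e (in_tl (in_tl He))).
rewrite !big_cons.
move: L HFDpos; set FD := \prod_(x <- D) (x - r); set FE := \prod_(e <- E) (e - r).
move=> L HFDpos.
have K1 : d * (p - r) * FD < (pk1 - r) * (pk - r) * FD.
  rewrite ltn_pmul2r //; apply: (leq_trans H5); rewrite leq_mul2r; apply/orP; right; lia.
apply: (leq_trans K1).
apply: leq_trans (_ : (e2 - r) * (e1 - r) * FE <= _).
  apply: leq_mul => //; apply: leq_mul; apply: leq_sub2r; lia.
have -> : M * ((e1 - r) * ((e2 - r) * FE)) = M * ((e2 - r) * (e1 - r) * FE) by nia.
by apply: leq_pmull.
Qed.


Theorem theorem2p1 (r l k d : nat) :
  0 < r ->
  b r + 2 <= k ->
  inB r d ->
  d < pth (k + 1) - r ->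
  d * (pth (k + l) - r) < (d + 1) * (pth k - r) ->
  inF r (d * pth (k + l) * \prod_(b r + 1 <= i < k) pth i).
Proof.
move=> Hr Hk HdB H4 H5.
have [Hb1 Hb2] := b_spec r.
have EP : \prod_(b r + 1 <= i < k) pth i = \prod_(q <- pA r k) q by rewrite /pA big_map.
rewrite EP.
have Hpk_r : r < pth k by apply: leq_trans Hb2 (pth_le _); lia.
have Hpkp : pth k <= pth (k + l) by apply: pth_le; lia.
have Hpkprime : prime (pth k) by apply: pth_prime; lia.
have Hpprime : prime (pth (k + l)) by apply: pth_prime; lia.
have Hnext : forall q, prime q -> pth k < q -> pth (k + 1) <= q.
  by move=> q Hq Hlt; rewrite addn1; apply: pth_next.
move: H4 H5 Hpk_r Hpkp Hpkprime Hpprime Hnext.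
set pk := pth k; set p := pth (k + l); set pk1 := pth (k + 1).
move=> H4 H5 Hpk_r Hpkp Hpkprime Hpprime Hnext.
set P := pA r k.
have HP : forall q, (q \in P) = [&& prime q, r < q & q < pk] by move=> q; exact: mem_pA.
move/inB_iff: HdB => [Hd0 HdP].
set n := d * p * \prod_(q <- P) q.
have HPpos : 0 < \prod_(q <- P) q.
  rewrite big_seq prodn_cond_gt0 // => q; rewrite HP => /and3P[H _ _]; exact: prime_gt0.
have Hn0 : 0 < n by rewrite /n !muln_gt0 Hd0 HPpos prime_gt0.
have Hmem : forall q, (q \in primes n) = (q \in p :: P).
  move=> q; rewrite mem_primes Hn0 /= inE.
  apply/idP/idP.
    case/andP => Hq Hdv.
    move: Hdv; rewrite /n !Euclid_dvdM // => /orP[/orP[Hdd|Hdp]|Hdp].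
    - have Hqd : q \in primes d by rewrite mem_primes Hq Hd0 Hdd.
      have Hqr := HdP q Hqd.
      have Hqd' : q <= d by apply: dvdn_leq.
      case: (ltnP q pk) => Hqk.
        by rewrite HP Hq Hqr Hqk orbT.
      case: (ltnP pk q) => Hqk2.
        have := Hnext q Hq Hqk2; lia.
      have Eq : q = pk by lia.
      have Ep : p = pk by subst q; nia.
      by rewrite Eq Ep eqxx.
    - by rewrite ((prime_nt_dvdP Hpprime _) Hdp) ?eqxx //; case: (q) Hq => [|[|]].
    - move: Hdp; rewrite Euclid_dvd_prod // big_has => /hasP[x Hx Hqx].
      move: (Hx); rewrite HP => /and3P[Hxp _ _].
      have Eqx : q = x by apply/eqP; rewrite -(dvdn_prime2 Hq Hxp).
      by rewrite Eqx Hx orbT.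
  case/orP => [/eqP->|Hq].
    by rewrite Hpprime /n /=; apply: dvdn_mulr; apply: dvdn_mull.
  move: (Hq); rewrite HP => /and3P[Hqp _ _]; rewrite Hqp /=.
  rewrite /n; apply: dvdn_mull; rewrite (big_rem _ Hq) /=; exact: dvdn_mulr.
have HpP : p \notin P by rewrite HP; apply/negP => /and3P[_ _ H]; lia.
have Huniq : uniq (p :: P) by rewrite /= HpP uniq_pA.
have Hperm : perm_eq (primes n) (p :: P) by apply: uniq_perm => //; exact: primes_uniq.
have HnP : forall q, q \in primes n -> r < q.
  move=> q; rewrite Hmem inE => /orP[/eqP->|]; first lia.
  by rewrite HP => /and3P[].
have HnB : inB r n by apply/inB_iff.
have ESn : Schemmel r n = d * ((p - r) * \prod_(q <- P) (q - r)).
  have E1 := x_eq Hn0.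
  rewrite (S_eq HnP) (perm_big _ Hperm) big_cons.
  rewrite (perm_big _ Hperm) big_cons in E1.
  have HM : Mx n = d.
    apply/eqP; rewrite -(eqn_pmul2r (_ : 0 < p * \prod_(q <- P) q)).
      by rewrite -E1 /n mulnA.
    by rewrite muln_gt0 HPpos prime_gt0.
  by rewrite HM.
split => // m Hm Hnm.
move/inB_iff: (Hm) => [Hm0 HmP].
have Em := x_eq Hm0.
rewrite ESn (S_eq HmP).
rewrite {1}Em in Hnm.
move: Em Hnm; set s := primes m; set M := Mx m => Em Hnm.
set C := [seq q <- s | q < pk].
set E := [seq q <- s | ~~ (q < pk)].
set D := [seq q <- P | q \notin s].
have Hsplit1 : forall F, \prod_(q <- s) F q = \prod_(q <- C) F q * \prod_(q <- E) F q.
  by move=> F; rewrite (bigID (fun q => q < pk)) /= !big_filter.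
have Hperm2 : perm_eq [seq q <- P | q \in s] C.
  apply: uniq_perm; rewrite ?filter_uniq ?uniq_pA ?primes_uniq //.
  move=> q; rewrite !mem_filter HP.
  case Hqs: (q \in s); rewrite /= ?andbF //.
  move: (Hqs); rewrite /s mem_primes => /and3P[Hq _ _].
  by rewrite Hq (HmP q Hqs) andbT.
have Hsplit2 : forall F, \prod_(q <- P) F q = \prod_(q <- C) F q * \prod_(q <- D) F q.
  move=> F; rewrite (bigID (fun q => q \in s)) /=; congr (_ * _).
    by rewrite -(perm_big _ Hperm2) big_filter.
  by rewrite /D big_filter.
have HCpos : 0 < \prod_(q <- C) q.
  rewrite big_seq prodn_cond_gt0 // => q; rewrite mem_filter => /andP[_ Hq].
  by move: Hq; rewrite /s mem_primes => /and3P[/prime_gt0].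
have HCFpos : 0 < \prod_(q <- C) (q - r).
  rewrite big_seq prodn_cond_gt0 // => q; rewrite mem_filter => /andP[_ Hq].
  rewrite subn_gt0; exact: HmP.
have HM0 : 0 < M by move: Hm0; rewrite Em muln_gt0 => /andP[].
have Hcore := @core r d M p pk pk1 D E.
have Hlt : d * p * \prod_(x <- D) x < M * \prod_(e <- E) e.
  move: Hnm; rewrite /n Hsplit1 Hsplit2.
  have -> : d * p * (\prod_(q <- C) q * \prod_(q <- D) q) = (d * p * \prod_(q <- D) q) * \prod_(q <- C) q by rewrite [X in _ * X]mulnC !mulnA.
  have -> : M * (\prod_(q <- C) q * \prod_(q <- E) q) = (M * \prod_(q <- E) q) * \prod_(q <- C) q by rewrite [X in _ * X]mulnC !mulnA.
  by rewrite ltn_pmul2r.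
have Hres : d * (p - r) * \prod_(x <- D) (x - r) < M * \prod_(e <- E) (e - r).
  apply: Hcore => //.
  - move=> x; rewrite mem_filter HP => /andP[_ /and3P[_ H1 H2]]; by rewrite H1 H2.
  - by move=> e; rewrite mem_filter => /andP[H _]; rewrite leqNgt.
  - apply: sorted_filter; [exact: ltn_trans | exact: sorted_primes].
  - by move=> e; rewrite mem_filter => /andP[_]; rewrite /s mem_primes => /and3P[].
rewrite Hsplit1 Hsplit2.
have -> : d * ((p - r) * (\prod_(q <- C) (q - r) * \prod_(q <- D) (q - r))) = (d * (p - r) * \prod_(q <- D) (q - r)) * \prod_(q <- C) (q - r) by rewrite [X in _ * (_ * X)]mulnC !mulnA.
have -> : M * (\prod_(q <- C) (q - r) * \prod_(q <- E) (q - r)) = (M * \prod_(q <- E) (q - r)) * \prod_(q <- C) (q - r) by rewrite [X in _ * X]mulnC !mulnA.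
by rewrite ltn_pmul2r.
Qed.
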